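(* Let $\Omega \subset \mathbb{R}^d$ be a bounded domain, let $\mu,\nu$ be Borel probability measures on $\Omega$, let $n\ge1$, and let $\phi:\Omega\to\mathbb{R}$ be a bounded continuous function. Suppose that $\mathcal{J}_1(\phi)\le\mathcal{J}_2(\phi)$ for all empirical measures $\mu_n=\frac1n\sum_{i=1}^n\delta_{X_i}$ and $\nu_n=\frac1n\sum_{i=1}^n\delta_{Y_i}$ with $X_1,\dots,X_n\in\operatorname{supp}(\mu)$ and $Y_1,\dots,Y_n\in\operatorname{supp}(\nu)$, where $\mathcal{J}_1(\phi) = \int_\Omega \phi\,\mathrm{d}\mu_n + \int_\Omega(-\phi)\,\mathrm{d}\nu_n$ and $\mathcal{J}_2(\phi) = \int_\Omega \phi\,\mathrm{d}\mu_n + \int_\Omega \phi^c(\cdot;\mu_n)\,\mathrm{d}\nu_n$. Then $\phi(x)-\phi(y)\le|x-y|$ for all $(x,y)\in\operatorname{supp}(\mu)\times\operatorname{supp}(\nu)$.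
   Context: For a function $\psi:\Omega\to\mathbb{R}$ and a probability measure $\eta$ on $\Omega$, the $c$-transform of $\psi$ on the support of $\eta$ is $\psi^c(y;\eta) := \inf_{x\in\operatorname{supp}(\eta)}\{|x-y| - \psi(x)\}$ for $y\in\Omega$, with $|\cdot|$ the Euclidean norm. *)

(* Defs.v *)
From HB Require Import structures.
From mathcomp Require Import all_boot all_order all_algebra.
From mathcomp Require Import all_classical all_reals all_analysis.
Set Implicit Arguments. Unset Strict Implicit. Unset Printing Implicit Defensive.
Import Order.TTheory GRing.Theory Num.Theory.
Import numFieldNormedType.Exports.
Local Open Scope classical_set_scope.
Local Open Scope ring_scope.


Definition BorelRd (R : realType) (d : nat) :=
  g_sigma_algebraType (@open ('rV[R]_d)).

Definition enorm (R : realType) (d : nat) (x : 'rV[R]_d) : R :=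
  Num.sqrt (\sum_(i < d) (x ord0 i) ^+ 2).

Definition bounded_domain (R : realType) (d : nat) (Om : set 'rV[R]_d) : Prop :=
  Om !=set0 /\ open Om /\ connected Om /\ bounded_set Om.

Definition supp (R : realType) (d : nat) (Om : set 'rV[R]_d)
  (eta : {measure set (BorelRd R d) -> \bar R}) : set 'rV[R]_d :=
  [set x | Om x /\ forall U : set 'rV[R]_d, open U -> U x -> (0 < eta U)%E].

(* c-transform of psi on the support S of eta, c(x,y) = |x - y| *)
Definition ctransform (R : realType) (d : nat) (psi : 'rV[R]_d -> R)
  (S : set 'rV[R]_d) (y : 'rV[R]_d) : R :=
  inf [set enorm (x - y) - psi x | x in S].

Definition empirical (R : realType) (d : nat) (n : nat) (X : nat -> BorelRd R d)
  : {measure set (BorelRd R d) -> \bar R} :=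
  mscale (n%:R^-1)%:nng (msum (fun i => \d_(X i)) n).

(* Main.v *)
Require Import Defs.
From HB Require Import structures.
From mathcomp Require Import all_boot all_order all_algebra.
From mathcomp Require Import all_classical all_reals all_analysis.
From mathcomp Require Import ring lra.
Import Order.TTheory GRing.Theory Num.Theory.
Import numFieldNormedType.Exports.
Local Open Scope classical_set_scope.
Local Open Scope ring_scope.

Lemma meas_cont (R : realType) d (D : set 'rV[R]_d) (f : 'rV[R]_d -> R) :
  open D -> {in D, continuous f} -> measurable_fun (D : set (BorelRd R d)) f.
Proof.
move=> oD cf; apply: (measurability _ (measurable_realfun.RGenOpens.measurableE R)).
move=> _ [_ [a [b ->]] <-]; apply: sub_sigma_algebra.
rewrite /= openE => z [Dz fz].
rewrite /interior.
have h1 : nbhs z D by exact: open_nbhs_nbhs.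
have h2 : nbhs z (f @^-1` `]a, b[) by apply: (cf z (mem_set Dz)); apply: open_nbhs_nbhs; split => //; exact: interval_open.
by apply: filterI.
Qed.

Lemma enorm_cont (R : realType) d (x : 'rV[R]_d) :
  continuous (fun w : 'rV[R]_d => enorm (x - w)).
Proof.
move=> z; rewrite /enorm.
apply: (continuous_comp (f := fun w : 'rV[R]_d => \sum_(i < d) ((x - w) ord0 i) ^+ 2)); last exact: sqrt_continuous.
have -> : (fun w : 'rV[R]_d => \sum_(i < d) ((x - w) ord0 i) ^+ 2) =
   \sum_(i < d) (fun w : 'rV[R]_d => ((x - w) ord0 i) ^+ 2).
  by apply/funext => w; rewrite fct_sumE.
elim/big_ind: _.
- exact: cst_continuous.
- by move=> g h cg ch; apply: continuousD.
- move=> i _.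
  have hc : {for z, continuous (fun w : 'rV[R]_d => (x - w) ord0 i)}.
    apply: (@continuous_comp _ _ _ (fun w : 'rV[R]_d => x - w) (fun M : 'rV[R]_d => M ord0 i)); last exact: coord_continuous.
    apply: continuousB; [exact: cst_continuous | exact: cvg_id].
  by apply: continuousM; exact: hc.
Qed.

Lemma emp_const (R : realType) d n (z : BorelRd R d) (A : set (BorelRd R d)) :
  (1 <= n)%N -> empirical n (fun _ => z) A = \d_z A.
Proof.
move=> n1; rewrite /empirical /= /mscale /= /msum /= diracE.
rewrite sumEFin -EFinM; congr EFin.
have hn : (n%:R : R) != 0 by rewrite pnatr_eq0 -lt0n.
rewrite sumr_const card_ord -mulr_natr. by field.
Qed.

Lemma int_emp (R : realType) d n (Om : set 'rV[R]_d) (z : BorelRd R d)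
  (f : 'rV[R]_d -> R) : (1 <= n)%N -> open Om -> Om z ->
  {in Om, continuous f} ->
  (\int[empirical n (fun _ => z)]_(w in Om) (f w)%:E = (f z)%:E)%E.
Proof.
move=> n1 oOm Omz cf.
rewrite (eq_measure_integral (\d_z)); last by move=> A _ _; rewrite emp_const.
rewrite integral_dirac.
- by rewrite diracE mem_set // mul1e.
- exact: sub_sigma_algebra.
- by apply/measurable_realfun.measurable_EFinP; apply: meas_cont.
Qed.

Lemma supp_emp (R : realType) d n (Om : set 'rV[R]_d) (z : BorelRd R d) :
  (1 <= n)%N -> Om z -> supp Om (empirical n (fun _ => z)) = [set z].
Proof.
move=> n1 Omz; apply/seteqP; split => w.
- move=> [Omw Hw] /=; apply: contrapT => wz.
  have oU : open (~` [set z]).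
    rewrite openC; apply: accessible_closed_set1.
    by apply: hausdorff_accessible; exact: norm_hausdorff.
  have := Hw _ oU wz.
  rewrite emp_const // diracE.
  have -> : (z \in ~` [set z]) = false by apply/negbTE/negP; rewrite in_setE /= => /(_ erefl).
  by rewrite ltxx.
- move=> -> /=; split => // U oU Uz.
  by rewrite emp_const // diracE mem_set.
Qed.

Theorem theorem3 (R : realType) (d : nat) (Om : set 'rV[R]_d)
  (mu nu : {measure set (BorelRd R d) -> \bar R}) (n : nat)
  (phi : 'rV[R]_d -> R) :
  bounded_domain Om ->
  mu setT = 1%E -> mu Om = 1%E ->
  nu setT = 1%E -> nu Om = 1%E ->
  (1 <= n)%N ->
  {within Om, continuous phi} ->
  (exists M : R, forall x, Om x -> `|phi x| <= M) ->
  (forall X Y : nat -> BorelRd R d,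
     (forall i, (i < n)%N -> supp Om mu (X i)) ->
     (forall i, (i < n)%N -> supp Om nu (Y i)) ->
     let mun := empirical n X in
     let nun := empirical n Y in
     (\int[mun]_(x in Om) (phi x)%:E + \int[nun]_(y in Om) (- phi y)%:E
      <= \int[mun]_(x in Om) (phi x)%:E
         + \int[nun]_(y in Om) (ctransform phi (supp Om mun) y)%:E)%E) ->
  forall x y : 'rV[R]_d, supp Om mu x -> supp Om nu y ->
    phi x - phi y <= enorm (x - y).
Proof.
move=> [_ [oOm _]] _ _ _ _ n1 cphi _ H x y sx sy.
have cphi' : {in Om, continuous phi} by rewrite -continuous_open_subspace.
have := H (fun _ => x) (fun _ => y) (fun _ _ => sx) (fun _ _ => sy).
cbv zeta.
rewrite (@supp_emp R d n Om x n1 sx.1).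
have -> : (fun w => (ctransform phi [set x] w)%:E) =
          (fun w => (enorm (x - w) - phi x)%:E).
  by apply/funext => w; rewrite /ctransform /inf image_set1 image_set1 sup1 opprK.
rewrite (@int_emp R d n Om x phi n1 oOm sx.1 cphi').
rewrite (@int_emp R d n Om y (fun w => - phi w) n1 oOm sy.1); last first.
  by move=> w /cphi' cw; exact: continuousN.
rewrite (@int_emp R d n Om y (fun w => enorm (x - w) - phi x) n1 oOm sy.1); last first.
  have hc : continuous (fun w : 'rV[R]_d => enorm (x - w) - phi x).
    move=> w; have h1 := @enorm_cont R d x w; have h2 := cvgB h1 (cvg_cst (phi x)); exact: h2.
  by move=> w _; exact: hc.
rewrite -!EFinD lee_fin => h.
lra.
Qed.
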